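(* Let $M$ be an atomic Puiseux monoid. (1) If $M$ is weak reciprocal, then $|\mathsf{L}_M(1)| = \infty$; in particular, $M$ is not a BFM. (2) If $M$ is reciprocal and $q \in M$ is nonzero, then $|\mathsf{L}_M(q)| \in \{1, \infty\}$; more precisely, $|\mathsf{L}_M(q)| = \infty$ if $1 \mid_M q$, and $|\mathsf{L}_M(q)| = 1$ if $1 \nmid_M q$.
   Context: A Puiseux monoid is an additive submonoid of $(\mathbb{Q}_{\ge 0},+)$. A weak reciprocal Puiseux monoid is one of the form $\langle \frac{1}{d_n} \mid n \in \mathbb{N}\rangle$ for a strictly increasing sequence $(d_n)_{n\ge1}$ of positive integers; it is reciprocal if moreover the $d_n$ are pairwise relatively prime. For $x,y \in M$, $x \mid_M y$ means $y = x + z$ for some $z \in M$. An atom of $M$ is a nonzero element $a$ such that $a=x+y$ with $x,y\in M$ forces $x=0$ or $y=0$; $\mathcal{A}(M)$ is the set of atoms, and $M$ is atomic if each element is a finite sum of atoms. For nonzero $x \in M$, a factorization of $x$ is a formal sum $z = a_1 + \dots + a_\ell$ (unordered, i.e., an element of the free commutative monoid on $\mathcal{A}(M)$) of atoms whose value in $M$ is $x$; its length is $|z| = \ell$; $\mathsf{Z}_M(x)$ is the set of factorizations of $x$ and $\mathsf{L}_M(x) = \{|z| \mid z \in \mathsf{Z}_M(x)\}$ its set of lengths. $M$ is a bounded factorization monoid (BFM) if it is atomic and $\mathsf{L}_M(x)$ is finite for every nonzero $x \in M$. *)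

(* Defs.v *)
From HB Require Import structures.
From mathcomp Require Import all_boot all_order all_algebra.
Set Implicit Arguments. Unset Strict Implicit. Unset Printing Implicit Defensive.
Import Order.TTheory GRing.Theory Num.Theory.
Local Open Scope ring_scope.

Definition is_puiseux (M : rat -> Prop) : Prop :=
  [/\ M 0,
      (forall x y, M x -> M y -> M (x + y)) &
      (forall x, M x -> 0 <= x)].

Definition recip_gen (d : nat -> nat) (x : rat) : Prop :=
  exists s : seq nat, x = \sum_(i <- s) ((d i)%:R)^-1.

Definition strinc_pos (d : nat -> nat) : Prop :=
  (forall n, (0 < d n)%N) /\ (forall n, (d n < d n.+1)%N).

Definition weak_reciprocal (M : rat -> Prop) : Prop :=
  exists d : nat -> nat, strinc_pos d /\ (forall x, M x <-> recip_gen d x).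

Definition reciprocal (M : rat -> Prop) : Prop :=
  exists d : nat -> nat, strinc_pos d /\
    (forall i j, i != j -> coprime (d i) (d j)) /\
    (forall x, M x <-> recip_gen d x).

Definition mdivides (M : rat -> Prop) (x y : rat) : Prop :=
  exists z, M z /\ y = x + z.

Definition is_atom (M : rat -> Prop) (a : rat) : Prop :=
  [/\ M a, a != 0 & forall x y, M x -> M y -> a = x + y -> x = 0 \/ y = 0].

Definition atomic (M : rat -> Prop) : Prop :=
  forall x, M x -> exists s : seq rat, (forall a, a \in s -> is_atom M a) /\ x = \sum_(a <- s) a.

Definition lengths (M : rat -> Prop) (x : rat) (n : nat) : Prop :=
  exists s : seq rat, [/\ forall a, a \in s -> is_atom M a, x = \sum_(a <- s) a & size s = n].

Definition finite_natset (A : nat -> Prop) : Prop :=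
  exists s : seq nat, forall n, A n <-> n \in s.

Definition BFM (M : rat -> Prop) : Prop :=
  atomic M /\ forall x, M x -> x != 0 -> finite_natset (lengths M x).

(* Main.v *)
Require Import Defs.
From mathcomp Require Import all_boot all_order all_algebra.
From mathcomp Require Import zify.
Import Order.TTheory GRing.Theory Num.Theory.
Set Implicit Arguments. Unset Strict Implicit. Unset Printing Implicit Defensive.

Lemma dvd_small_eq (a b m Q : nat) : coprime m Q -> a <= b -> b < m ->
  m %| (b - a) * Q -> a = b.
Proof.
move=> cop ab bm; rewrite Gauss_dvdl // => hd.
case: (posnP (b - a)) => [|hp]; first lia.
have := dvdn_leq hp hd; lia.
Qed.

Lemma core_count (d : nat -> nat) (hpos : forall i, 0 < d i)
  (hcop : forall i j, i != j -> coprime (d i) (d j)) (u v : seq nat) :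
  (forall i, count_mem i u < d i) -> (forall i, count_mem i v < d i) ->
  (\sum_(j <- u) ((d j)%:R^-1 : rat) = \sum_(j <- v) (d j)%:R^-1)%R ->
  forall i, count_mem i u = count_mem i v.
Proof.
move=> cu cv hs i.
set S := undup (u ++ v).
have uS : uniq S by apply: undup_uniq.
case iS : (i \in S); last first.
  move/negbT: iS; rewrite mem_undup mem_cat negb_or => /andP [iu iv].
  by rewrite !(count_memPn _).
set Q := fun j => \prod_(k <- S | k != j) d k.
set D := \prod_(k <- S) d k.
have DQ : forall j, j \in S -> D = d j * Q j.
  by move=> j jS; rewrite /D (bigD1_seq j).
have Dinv : forall j, j \in S -> (D%:R * (d j)%:R^-1 = (Q j)%:R :> rat)%R.
  move=> j jS; rewrite (DQ j jS) natrM mulrC mulrA mulVf ?mul1r //.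
  by rewrite pnatr_eq0 -lt0n hpos.
have sumE : forall w, {subset w <= S} ->
   (D%:R * \sum_(j <- w) ((d j)%:R^-1 : rat) = (\sum_(j <- w) Q j)%:R)%R.
  move=> w wS; rewrite mulr_sumr natr_sum.
  by apply: eq_big_seq => j /wS jS; rewrite Dinv.
have uS' : {subset u <= S} by move=> x xu; rewrite mem_undup mem_cat xu.
have vS' : {subset v <= S} by move=> x xv; rewrite mem_undup mem_cat xv orbT.
have eN : (\sum_(j <- u) Q j) = (\sum_(j <- v) Q j).
  apply/eqP; rewrite -(eqr_nat rat) -sumE // -sumE // hs //.
have split : forall w, \sum_(j <- w) Q j = count_mem i w * Q i + \sum_(j <- w | j != i) Q j.
  move=> w; rewrite (bigID (pred1 i)) /=; congr (_ + _).
  rewrite (eq_bigr (fun _ => Q i)); last by move=> j /eqP ->.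
  by rewrite big_const_seq iter_addn_0 mulnC.
have dvdrest : forall w, d i %| \sum_(j <- w | j != i) Q j.
  move=> w; apply: dvdn_sum => j ji.
  rewrite /Q -big_filter (bigD1_seq i) ?dvdn_mulr //.
    by rewrite mem_filter eq_sym ji iS.
  exact: filter_uniq.
have cop : coprime (d i) (Q i).
  rewrite /Q; elim/big_ind: _ => //; first by rewrite coprimen1.
    by move=> x y; rewrite coprimeMr => -> ->.
  by move=> k ki; apply: hcop; rewrite eq_sym.
move: eN; rewrite !split.
move: (dvdrest u) (dvdrest v) => /dvdnP [X ->] /dvdnP [Y ->] e.
case: (leqP (count_mem i u) (count_mem i v)) => h.
  apply: (dvd_small_eq cop h); first exact: cv. rewrite mulnBl.
  apply/dvdnP; exists (X - Y); nia.
symmetry; apply: (dvd_small_eq cop (ltnW h)); first exact: cu. rewrite mulnBl.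
apply/dvdnP; exists (Y - X); nia.
Qed.

Local Open Scope ring_scope.

Lemma iter_addr (a : rat) n : iter n (+%R a) 0 = a *+ n.
Proof. by elim: n => //= n ->; rewrite mulrS. Qed.

Lemma inv_mulrn (k : nat) : (0 < k)%N -> (k%:R : rat)^-1 *+ k = 1.
Proof. by move=> k0; rewrite -[LHS]mulr_natr mulVf // pnatr_eq0 -lt0n. Qed.

Lemma M_sum (M : rat -> Prop) (hP : is_puiseux M) (s : seq rat) :
  (forall a, a \in s -> is_atom M a) -> M (\sum_(a <- s) a).
Proof.
case: hP => M0 MD _.
elim: s => [|a s IH] h; first by rewrite big_nil.
rewrite big_cons; apply: MD.
  by case: (h a (mem_head _ _)).
by apply: IH => b bs; apply: h; rewrite in_cons bs orbT.
Qed.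

Lemma recip_M (M : rat -> Prop) d (hM : forall x, M x <-> recip_gen d x) s :
  M (\sum_(i <- s) ((d i)%:R)^-1).
Proof. by apply/hM; exists s. Qed.

Lemma atom_inv (M : rat -> Prop) d (hd : strinc_pos d)
  (hM : forall x, M x <-> recip_gen d x) a :
  is_atom M a -> exists i, a = ((d i)%:R)^-1.
Proof.
case=> Ma a0 hat; move/hM: (Ma) => [[|i s] ha].
  by move: a0; rewrite ha big_nil eqxx.
move: ha; rewrite big_cons => ha.
exists i; case: (hat _ _ (recip_M hM [:: i]) (recip_M hM s)).
- by rewrite big_seq1.
  rewrite big_seq1 => /eqP; rewrite invr_eq0 pnatr_eq0 => /eqP di0.
  by case: hd => /(_ i); rewrite di0.
- by move=> e; rewrite ha e addr0.
Qed.

Lemma d_gt (d : nat -> nat) (hd : strinc_pos d) n : (n < d n)%N.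
Proof.
case: hd => h0 h1; elim: n => [|n IH]; first exact: h0.
by apply: leq_ltn_trans (h1 n).
Qed.

Lemma big_atom (M : rat -> Prop) (hP : is_puiseux M) (hA : atomic M) :
  weak_reciprocal M -> forall B : nat, exists k : nat,
    (B < k)%N /\ is_atom M ((k%:R)^-1).
Proof.
case=> d [hd hM] B.
have [hpos _] := hd.
have Mg := recip_M hM [:: B]; rewrite big_seq1 in Mg.
have [s [hs e]] := hA _ Mg.
case: s hs e => [|a s] hs e.
  move: e; rewrite big_nil => /eqP; rewrite invr_eq0 pnatr_eq0 => /eqP dB0.
  by move: (hpos B); rewrite dB0.
have aat := hs a (mem_head _ _).
have [i ai] := atom_inv hd hM aat.
exists (d i); split; last by rewrite -ai.
have s0 : 0 <= \sum_(b <- s) b.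
  have [_ _ hge] := hP; apply: hge; apply: M_sum => // b bs.
  by apply: hs; rewrite in_cons bs orbT.
have ag : a <= ((d B)%:R)^-1 by rewrite e big_cons lerDl.
move: ag; rewrite ai lef_pV2 ?posrE ?ltr0n ?hpos // ler_nat => h.
by apply: leq_trans h; apply: d_gt.
Qed.

Lemma mem_le_sumn (s : seq nat) n : n \in s -> (n <= sumn s)%N.
Proof.
elim: s => //= a s IH; rewrite in_cons => /orP [/eqP ->|/IH]; lia.
Qed.

Lemma unbounded (M : rat -> Prop) (hP : is_puiseux M) (hA : atomic M) x :
  (forall B : nat, exists k : nat, (B < k)%N /\ is_atom M ((k%:R)^-1)) ->
  mdivides M 1 x -> ~ finite_natset (lengths M x).
Proof.
move=> hB [z [Mz ->]] [s hs].
have [t [ht et]] := hA _ Mz.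
have [k [Bk ak]] := hB (sumn s).
have k0 : (0 < k)%N by lia.
have : lengths M (1 + z) (k + size t)%N.
  exists (nseq k ((k%:R)^-1) ++ t); split.
  - move=> a; rewrite mem_cat mem_nseq => /orP [/andP [_ /eqP ->]|]; first exact: ak.
    exact: ht.
  - by rewrite big_cat big_nseq iter_addr inv_mulrn // et.
  - by rewrite size_cat size_nseq.
move/hs/mem_le_sumn; lia.
Qed.

Lemma fact_idx (M : rat -> Prop) d (hd : strinc_pos d)
  (hM : forall x, M x <-> recip_gen d x) (s : seq rat) :
  (forall a, a \in s -> is_atom M a) ->
  exists u : seq nat, size u = size s /\
    \sum_(a <- s) a = \sum_(j <- u) ((d j)%:R)^-1.
Proof.
elim: s => [|a s IH] h; first by exists [::]; rewrite !big_nil.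
have [i ai] := atom_inv hd hM (h a (mem_head _ _)).
have [u [su eu]] : exists u : seq nat, size u = size s /\
    \sum_(a <- s) a = \sum_(j <- u) ((d j)%:R)^-1.
  by apply: IH => b bs; apply: h; rewrite in_cons bs orbT.
by exists (i :: u); rewrite /= su !big_cons eu ai.
Qed.

Lemma count_lt (M : rat -> Prop) d (hM : forall x, M x <-> recip_gen d x)
  (hpos : forall i, (0 < d i)%N) (u : seq nat) i :
  ~ mdivides M 1 (\sum_(j <- u) ((d j)%:R)^-1) -> (count_mem i u < d i)%N.
Proof.
move=> nd; rewrite ltnNge; apply/negP => h; apply: nd.
have [e ce] : exists e, count_mem i u = (d i + e)%N by exists (count_mem i u - d i)%N; lia.
exists (\sum_(j <- nseq e i ++ [seq j <- u | j != i]) ((d j)%:R)^-1); split.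
  exact: recip_M hM _.
rewrite (bigID (pred1 i)) /= big_cat big_nseq big_filter iter_addr.
rewrite (eq_bigr (fun _ => ((d i)%:R)^-1)); last by move=> j /eqP ->.
rewrite big_const_seq iter_addr ce mulrnDr inv_mulrn // addrA.
done.
Qed.

Lemma unique_len (M : rat -> Prop) d (hd : strinc_pos d)
  (hcop : forall i j, i != j -> coprime (d i) (d j))
  (hM : forall x, M x <-> recip_gen d x) q (s t : seq rat) :
  ~ mdivides M 1 q ->
  (forall a, a \in s -> is_atom M a) -> q = \sum_(a <- s) a ->
  (forall a, a \in t -> is_atom M a) -> q = \sum_(a <- t) a ->
  size s = size t.
Proof.
move=> nd hs es ht et.
have [u [su eu]] := fact_idx hd hM hs.
have [v [sv ev]] := fact_idx hd hM ht.
have [hpos _] := hd.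
rewrite -su -sv; apply: perm_size.
rewrite /perm_eq; apply/allP => x _; apply/eqP.
apply: (core_count hpos hcop).
- by move=> i; apply: (count_lt hM hpos); rewrite -eu -es.
- by move=> i; apply: (count_lt hM hpos); rewrite -ev -et.
- by rewrite -eu -ev -es -et.
Qed.

Theorem proposition4p8 (M : rat -> Prop) :
  is_puiseux M -> atomic M ->
  (weak_reciprocal M -> ~ finite_natset (lengths M 1) /\ ~ BFM M) /\
  (reciprocal M -> forall q : rat, M q -> q != 0 ->
     (mdivides M 1 q -> ~ finite_natset (lengths M q)) /\
     (~ mdivides M 1 q -> exists n : nat, forall m, lengths M q m <-> m = n)).
Proof.
move=> hP hA; split.
  move=> hW; have hB := big_atom hP hA hW.
  have h1 : mdivides M 1 1.
    by exists 0; split; [case: hP | rewrite addr0].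
  have nf := unbounded hP hA hB h1.
  split => // [[_ hb]]; apply: nf; apply: hb; last by rewrite oner_eq0.
  case: hW => d [[hpos _] hM]; apply/hM; exists (nseq (d 0%N) 0%N).
  by rewrite big_nseq iter_addr inv_mulrn.
move=> [d [hd [hcop hM]]] q Mq q0.
have hW : weak_reciprocal M by exists d.
split. by move=> hd1; apply: (unbounded hP hA (big_atom hP hA hW) hd1).
move=> nd; have [s [hs es]] := hA _ Mq.
exists (size s) => m; split.
  case=> t [ht et <-]; symmetry; exact: (unique_len hd hcop hM nd hs es ht et).
by move=> ->; exists s.
Qed.
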